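(* Let $I_o\subseteq\mathbf{EFSym}$ be the subspace spanned by the $\mathbf S^f$ with $f$ not acyclic (i.e. $f$ has a cycle of length $\ge2$). Then $I_o$ is a Hopf ideal of $\mathbf{EFSym}$, and the quotient $\mathbf{EFSym}/I_o$ is isomorphic, as a Hopf algebra, to the Hopf subalgebra spanned by the $\mathbf S^\phi$ with $\phi$ acyclic, hence to $\mathbf H_o$.
   Context: $\mathbf{EFSym}$: over $A=\{a_{ij}:i\ne j,\ i,j\ge1\}$ with $a_{ij}\prec a_{kl}$ iff $j=k$, for $f:[n]\to[n]$, $\mathbf S^f$ is the sum of words $w_1\cdots w_n$ over $A$ with $w_{f(j)}\prec w_j$ whenever $f(j)\ne j$; these are linearly independent and span $\mathbf{EFSym}$, with product $\mathbf S^f\mathbf S^g=\mathbf S^{f\bullet g}$ (shifted concatenation: $i\mapsto f(i)$ for $i\le n$, $n+i\mapsto g(i)+n$) and coproduct $\Delta\mathbf S^f=\sum_{I\models f}\mathbf S^{\mathrm{std}(f^{[n]\setminus I})}\otimes\mathbf S^{\mathrm{std}(f^I)}$, where $I\models f$ means $f^{-1}(I)\subseteq I$, $f^I(x)=f(x)$ if $f(x)\in I$ and $x$ otherwise, and $\mathrm{std}$ conjugates by the increasing bijection $I\to[|I|]$. $\mathbf H_o$ is the Hopf algebra of ordered forests (rooted forests on vertex set $[n]$, product by shifted disjoint union, coproduct by admissible cuts), identified with the span of $\mathbf S^\phi$, $\phi$ acyclic, via $\mathcal F\mapsto\mathbf S^{f_{\mathcal F}}$ where $f_{\mathcal F}$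 maps each vertex to its parent and fixes roots. *)

(* Defs.v *)
From HB Require Import structures.
From mathcomp Require Import all_boot all_order all_algebra.
Set Implicit Arguments. Unset Strict Implicit. Unset Printing Implicit Defensive.
Import Order.TTheory GRing.Theory.
Local Open Scope ring_scope.

(* Basis of EFSym: endofunctions f : [n] -> [n]  (here 'I_n -> 'I_n),  *)
(* for all n.  The basis element S^f is the pair (n, f).              *)
Definition EF := {n : nat & {ffun 'I_n -> 'I_n}}.
Definition efdeg (b : EF) : nat := tag b.

(* f is acyclic: no cycle of length >= 2, i.e. every periodic point is a
   fixed point. *)
Definition acyclic n (f : {ffun 'I_n -> 'I_n}) : Prop :=
  forall (x : 'I_n) (k : nat), iter k.+1 f x = x -> f x = x.
Definition acyclicB (b : EF) : Prop := acyclic (tagged b).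
Definition nonacyclicB (b : EF) : Prop := ~ acyclicB b.

(* Finite formal linear combinations over a basis B (elements of the  *)
(* free K-module on B), compared through their coefficients.          *)
Definition lc (K : fieldType) (B : eqType) := seq (K * B).

Definition coef (K : fieldType) (B : eqType) (x : lc K B) (b : B) : K :=
  \sum_(p <- x) (if p.2 == b then p.1 else 0).

Definition lceq (K : fieldType) (B : eqType) (x y : lc K B) : Prop :=
  forall b, coef x b = coef y b.

Definition lcscale (K : fieldType) (B : eqType) (c : K) (x : lc K B) : lc K B :=
  [seq (c * q.1, q.2) | q <- x].

Definition lcopp (K : fieldType) (B : eqType) (x : lc K B) : lc K B :=
  lcscale (-1) x.

Definition lcext (K : fieldType) (B C : eqType) (F : B -> lc K C) (x : lc K B)
  : lc K C := flatten [seq lcscale p.1 (F p.2) | p <- x].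

Definition inSpan (K : fieldType) (B : eqType) (P : B -> Prop) (x : lc K B)
  : Prop := forall b, ~ P b -> coef x b = 0.

Definition shconc n m (f : {ffun 'I_n -> 'I_n}) (g : {ffun 'I_m -> 'I_m})
  : {ffun 'I_(n + m) -> 'I_(n + m)} :=
  [ffun i => match split i with
             | inl j => lshift m (f j)
             | inr j => rshift n (g j)
             end].

Definition mulB (a b : EF) : EF :=
  Tagged (fun k => {ffun 'I_k -> 'I_k}) (shconc (tagged a) (tagged b)).

Definition efmul (K : fieldType) (x y : lc K EF) : lc K EF :=
  lcext (fun a => lcext (fun b => [:: (1, mulB a b)]) y) x.

Definition ef_empty : EF :=
  Tagged (fun k => {ffun 'I_k -> 'I_k}) ([ffun i => i] : {ffun 'I_0 -> 'I_0}).

Definition efunit (K : fieldType) : lc K EF := [:: (1, ef_empty)].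

(* f^I restricted to I (f^I(x) = f(x) if f(x) in I, x otherwise), then *)
(* standardised by the increasing bijection I -> [|I|] (enum_val is    *)
(* increasing since enum 'I_n is increasing).                          *)
Definition stdres n (f : {ffun 'I_n -> 'I_n}) (I : {set 'I_n})
  : {ffun 'I_#|I| -> 'I_#|I|} :=
  [ffun i : 'I_#|I| =>
     let y := f (enum_val i) in
     if y \in I then insubd i (index y (enum I)) else i].

Definition admissible n (f : {ffun 'I_n -> 'I_n}) (I : {set 'I_n}) : bool :=
  f @^-1: I \subset I.

Definition mkEF m (g : {ffun 'I_m -> 'I_m}) : EF :=
  Tagged (fun k => {ffun 'I_k -> 'I_k}) g.

Definition coprodB (K : fieldType) (b : EF) : lc K (prod EF EF) :=
  let: existT n f := b in
  [seq (1, (mkEF (stdres f (~: A)), mkEF (stdres f A)))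
  | A <- enum [pred A : {set 'I_n} | admissible f A]].

Definition efcop (K : fieldType) (x : lc K EF) : lc K (prod EF EF) :=
  lcext (@coprodB K) x.

Definition efcounit (K : fieldType) (x : lc K EF) : K :=
  \sum_(p <- x) (if efdeg p.2 == 0%N then p.1 else 0).

(* Antipode: the unique one of the graded connected bialgebra,         *)
(* S(1) = 1 and for deg f > 0:                                         *)
(*   S(S^f) = - sum_{I |= f, I <> empty} S(S^{std f^{[n]\I}}) S^{std f^I} *)
(* (the term I = empty is S^f (x) 1).  Defined with fuel = degree + 1. *)
Fixpoint antipF (K : fieldType) (k : nat) (b : EF) : lc K EF :=
  match k with
  | 0 => [::]
  | k'.+1 =>
    let: existT n f := b in
    if n == 0%N then [:: (1, b)] else
    lcopp (flatten
      [seq efmul (antipF K k' (mkEF (stdres f (~: A)))) [:: (1, mkEF (stdres f A))]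
      | A <- enum [pred A : {set 'I_n} | admissible f A && (A != set0)]])
  end.

Definition antipB (K : fieldType) (b : EF) : lc K EF := antipF K (efdeg b).+1 b.

Definition efantipode (K : fieldType) (x : lc K EF) : lc K EF :=
  lcext (@antipB K) x.

(* Hopf ideal / Hopf subalgebra for a subspace spanned by the basis    *)
(* elements satisfying P.  For such J, J (x) H + H (x) J is the span of *)
(* the b1 (x) b2 with P b1 or P b2.                                    *)
Definition hopf_ideal (K : fieldType) (P : EF -> Prop) : Prop :=
  [/\ (forall x y : lc K EF, inSpan P x ->
         inSpan P (efmul x y) /\ inSpan P (efmul y x)),
      (forall x : lc K EF, inSpan P x ->
         forall b1 b2, ~ P b1 -> ~ P b2 -> coef (efcop x) (b1, b2) = 0),
      (forall x : lc K EF, inSpan P x -> efcounit x = 0)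
    & (forall x : lc K EF, inSpan P x -> inSpan P (efantipode x))].

Definition hopf_subalgebra (K : fieldType) (P : EF -> Prop) : Prop :=
  [/\ inSpan P (efunit K),
      (forall x y : lc K EF, inSpan P x -> inSpan P y -> inSpan P (efmul x y)),
      (forall x : lc K EF, inSpan P x ->
         forall b1 b2, ~ (P b1 /\ P b2) -> coef (efcop x) (b1, b2) = 0)
    & (forall x : lc K EF, inSpan P x -> inSpan P (efantipode x))].

Definition tensor_map (K : fieldType) (F : EF -> lc K EF) (t : lc K (prod EF EF))
  : lc K (prod EF EF) :=
  lcext (fun p : prod EF EF =>
          [seq (a.1 * c.1, (a.2, c.2)) | a <- F p.1, c <- F p.2]) t.

Definition hopf_morphism (K : fieldType) (phi : EF -> lc K EF) : Prop :=
  [/\ lceq (lcext phi (efunit K)) (efunit K),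
      (forall x y : lc K EF,
         lceq (lcext phi (efmul x y)) (efmul (lcext phi x) (lcext phi y))),
      (forall x : lc K EF,
         lceq (efcop (lcext phi x)) (tensor_map phi (efcop x))),
      (forall x : lc K EF, efcounit (lcext phi x) = efcounit x)
    & (forall x : lc K EF,
         lceq (lcext phi (efantipode x)) (efantipode (lcext phi x)))].

(* Main.v *)
Require Import Defs.
From HB Require Import structures.
From mathcomp Require Import all_boot all_order all_algebra.
From Stdlib Require Import ClassicalEpsilon.
Set Implicit Arguments. Unset Strict Implicit. Unset Printing Implicit Defensive.

Definition acycf (T : Type) (h : T -> T) :=
  forall x k, iter k.+1 h x = x -> h x = x.

Lemma acycf_close (T : eqType) (h g : T -> T) : acycf h ->
  (forall z, g z = h z \/ g z = z) -> acycf g.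
Proof.
move=> ah cl x k H.
case Hall: (all (fun s => g (iter s g x) == h (iter s g x)) (iota 0 k.+1)).
  have E : forall t, t <= k.+1 -> iter t g x = iter t h x.
    elim=> [//|t IH] lt; rewrite !iterS IH ?(ltnW lt) //.
    have /allP /(_ t) : all (fun s => g (iter s g x) == h (iter s g x)) (iota 0 k.+1) by [].
    rewrite mem_iota /= add0n => /(_ lt) /eqP.
    by rewrite IH ?(ltnW lt).
  have hx := ah x k; rewrite -E // in hx; have hxx := hx H.
  have /allP /(_ 0) := Hall; rewrite mem_iota /= => /(_ isT) /eqP ->.
  exact: hxx.
move/negbT: Hall; rewrite -has_predC => /hasP [s]; rewrite mem_iota add0n /= => ls ne.
have gz : g (iter s g x) = iter s g x.
  by case: (cl (iter s g x)) => // e; rewrite e eqxx in ne.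
have Hd : forall d, iter (d + s) g x = iter s g x.
  by move=> d; rewrite iterD iter_fix.
have : iter k.+1 g x = iter s g x by rewrite -(subnK (ltnW ls)) Hd.
by rewrite H => ->.
Qed.

Definition fI n (f : {ffun 'I_n -> 'I_n}) (I : {set 'I_n}) (y : 'I_n) : 'I_n :=
  if f y \in I then f y else y.

Lemma stdres_conj n (f : {ffun 'I_n -> 'I_n}) (I : {set 'I_n}) (i : 'I_#|I|) :
  enum_val (stdres f I i) = fI f I (enum_val i).
Proof.
rewrite /stdres /fI ffunE /=.
case: ifP => // yI.
set y := f (enum_val i).
have lt : index y (enum I) < #|I| by rewrite cardE index_mem mem_enum.
rewrite (enum_val_nth y) val_insubd lt nth_index // mem_enum //.
Qed.

Lemma stdres_iter n (f : {ffun 'I_n -> 'I_n}) (I : {set 'I_n}) (i : 'I_#|I|) t :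
  enum_val (iter t (stdres f I) i) = iter t (fI f I) (enum_val i).
Proof. by elim: t => //= t IH; rewrite stdres_conj IH. Qed.

Lemma acyclic_stdres n (f : {ffun 'I_n -> 'I_n}) (I : {set 'I_n}) :
  acyclic f -> acyclic (stdres f I).
Proof.
move=> af.
have aI : acycf (fI f I).
  apply: (@acycf_close _ (fun y => f y)) => [x k|z]; first exact: af.
  by rewrite /fI; case: ifP; [left|right].
move=> i k H; apply: enum_val_inj; rewrite stdres_conj.
apply: (aI _ k); by rewrite -stdres_iter H.
Qed.

Lemma nonacyclic_stdres n (f : {ffun 'I_n -> 'I_n}) (I : {set 'I_n}) x k :
  x \in I -> iter k.+1 (fI f I) x = x -> fI f I x <> x -> ~ acyclic (stdres f I).
Proof.
move=> xI Hk ne ac.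
set i := enum_rank_in xI x.
have ei : enum_val i = x by rewrite /i enum_rankK_in.
have H1 : iter k.+1 (stdres f I) i = i.
  by apply: enum_val_inj; rewrite stdres_iter ei.
have := ac i k H1 => /(congr1 enum_val); rewrite stdres_conj ei; exact: ne.
Qed.

Lemma fI_iter n (f : {ffun 'I_n -> 'I_n}) (I : {set 'I_n}) x m :
  (forall t, 0 < t <= m -> iter t f x \in I) ->
  forall t, t <= m -> iter t (fI f I) x = iter t f x.
Proof.
move=> Hin; elim=> [//|t IH] lt.
rewrite !iterS IH ?(ltnW lt) // /fI.
by rewrite -iterS Hin // lt.
Qed.

Lemma nonacyclic_split n (f : {ffun 'I_n -> 'I_n}) (A : {set 'I_n}) :
  ~ acyclic f -> admissible f A ->
  ~ acyclic (stdres f (~: A)) \/ ~ acyclic (stdres f A).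
Proof.
move=> naf adm.
have [x [k [Hk ne]]] : exists x k, iter k.+1 f x = x /\ f x <> x.
  apply: NNPP => nex; apply: naf => x k Hk.
  apply: NNPP => ne; apply: nex; by exists x, k.
have admP : forall y, f y \in A -> y \in A.
  move=> y fy; have /subsetP := adm; apply; by rewrite inE.
case xA: (x \in A).
- right.
  set m := k.+1.
  have back : forall d, iter (m - d) f x \in A.
    elim=> [|d IH]; first by rewrite subn0 Hk.
    rewrite subnS; move: IH; case: (m - d) => [//|e] /=.
    exact: admP.
  have allin : forall t, 0 < t <= m -> iter t f x \in A.
    by move=> t /andP[_ tm]; rewrite -(subKn tm) back.
  have E := fI_iter allin.
  apply: (nonacyclic_stdres (x := x) (k := k)) => //.
    by rewrite E.
  by have := E 1 isT; rewrite /= => ->.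
- left.
  have fwd : forall t, iter t f x \in ~: A.
    elim=> [|t IH]; first by rewrite inE xA.
    rewrite iterS inE; apply/negP => /admP; rewrite inE in IH.
    by move/negP: IH.
  have E := @fI_iter n f (~: A) x k.+1 (fun t _ => fwd t).
  apply: (nonacyclic_stdres (x := x) (k := k)).
  - exact: (fwd 0).
  - by rewrite E.
  - by have := E 1 isT; rewrite /= => ->.
Qed.
Section Sh.
Variables (n m : nat) (f : {ffun 'I_n -> 'I_n}) (g : {ffun 'I_m -> 'I_m}).

Lemma shconc_l j : shconc f g (lshift m j) = lshift m (f j).
Proof.
rewrite /shconc ffunE.
have -> : split (lshift m j) = inl j by exact: (unsplitK (inl _ j)).
by [].
Qed.

Lemma shconc_r j : shconc f g (rshift n j) = rshift n (g j).
Proof.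
rewrite /shconc ffunE.
have -> : split (rshift n j) = inr j by exact: (unsplitK (inr _ j)).
by [].
Qed.

Lemma iter_l t j : iter t (shconc f g) (lshift m j) = lshift m (iter t f j).
Proof. by elim: t => //= t ->; rewrite shconc_l. Qed.

Lemma iter_r t j : iter t (shconc f g) (rshift n j) = rshift n (iter t g j).
Proof. by elim: t => //= t ->; rewrite shconc_r. Qed.

Lemma acyclic_shconc : acyclic (shconc f g) <-> acyclic f /\ acyclic g.
Proof.
split.
  move=> a; split=> j k H.
    have := a (lshift m j) k; rewrite iter_l H shconc_l => /(_ erefl).
    exact: lshift_inj.
  have := a (rshift n j) k; rewrite iter_r H shconc_r => /(_ erefl).
  exact: rshift_inj.
move=> [af ag] x k; case: (split_ordP x) => j ->.
  by rewrite iter_l shconc_l => /lshift_inj /af ->.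
by rewrite iter_r shconc_r => /rshift_inj /ag ->.
Qed.
End Sh.

Definition acb (b : EF) : bool :=
  if excluded_middle_informative (acyclicB b) then true else false.

Lemma acbP b : reflect (acyclicB b) (acb b).
Proof. by rewrite /acb; case: excluded_middle_informative => h; constructor. Qed.

Lemma acb_mul a b : acb (mulB a b) = acb a && acb b.
Proof.
apply/acbP/andP => [/acyclic_shconc [h1 h2]|[/acbP h1 /acbP h2]].
  by split; apply/acbP.
by apply/acyclic_shconc.
Qed.

Lemma acb_deg0 b : efdeg b = 0 -> acb b.
Proof. case: b => n f /= e; subst n; apply/acbP => -[] //. Qed.

Lemma acb_empty : acb ef_empty.
Proof. exact: acb_deg0. Qed.
Import GRing.Theory.
Local Open Scope ring_scope.

Section Ev.
Variables (K : fieldType) (B : eqType).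
Implicit Types (x y : lc K B) (G H : B -> K).

Definition ev G x : K := \sum_(p <- x) p.1 * G p.2.
Definition dlt (b : B) : B -> K := fun a => (a == b)%:R.

Lemma coefE x b : coef x b = ev (dlt b) x.
Proof.
rewrite /coef /ev; apply: eq_bigr => p _; rewrite /dlt.
by case: (p.2 == b); rewrite ?mulr1 ?mulr0.
Qed.

Lemma ev_cat G x y : ev G (x ++ y) = ev G x + ev G y.
Proof. by rewrite /ev big_cat. Qed.

Lemma ev_nil G : ev G [::] = 0.
Proof. by rewrite /ev big_nil. Qed.

Lemma ev_cons1 G c b : ev G [:: (c, b)] = c * G b.
Proof. by rewrite /ev big_cons big_nil addr0. Qed.

Lemma ev_scale G c x : ev G (lcscale c x) = c * ev G x.
Proof.
rewrite /ev /lcscale big_map mulr_sumr; apply: eq_bigr => p _.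
by rewrite mulrA.
Qed.

Lemma ev_flatten G s : ev G (flatten s) = \sum_(z <- s) ev G z.
Proof.
elim: s => [|z s IH]; first by rewrite /= ev_nil big_nil.
by rewrite /= ev_cat IH big_cons.
Qed.

Lemma eq_ev_in G H x : (forall p, p \in x -> p.1 * G p.2 = p.1 * H p.2) ->
  ev G x = ev H x.
Proof. by move=> e; rewrite /ev; apply: eq_big_seq. Qed.

Lemma eq_ev G H x : (forall b, G b = H b) -> ev G x = ev H x.
Proof. by move=> e; apply: eq_ev_in => p _; rewrite e. Qed.

Lemma ev0 G x : (forall p, p \in x -> p.1 * G p.2 = 0) -> ev G x = 0.
Proof. by move=> e; rewrite /ev big1_seq // => p /andP[_ /e]. Qed.

Lemma ev_sub G H x : ev G x - ev H x = ev (fun b => G b - H b) x.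
Proof.
rewrite /ev -sumrB; apply: eq_bigr => p _; by rewrite mulrBr.
Qed.

Lemma sum_pick (S : seq B) (a : B) (F : B -> K) : uniq S -> a \in S ->
  \sum_(b <- S) (if a == b then F b else 0) = F a.
Proof.
move=> uS aS; rewrite -big_mkcond -big_filter.
have -> : [seq i <- S | a == i] = [:: a].
  rewrite -(filter_pred1_uniq uS aS); apply: eq_filter => i /=.
  by rewrite eq_sym.
by rewrite big_seq1.
Qed.

Lemma ev_regroup G x :
  ev G x = \sum_(b <- undup (map snd x)) coef x b * G b.
Proof.
rewrite /coef.
under eq_bigr do rewrite mulr_suml.
rewrite exchange_big /ev; apply: eq_big_seq => p px /=.
rewrite -(@sum_pick (undup (map snd x)) p.2 (fun b => p.1 * G b)).
- apply: eq_bigr => b _; rewrite eq_sym.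
  by case: (b == p.2); rewrite ?mul1r ?mul0r.
- exact: undup_uniq.
- by rewrite mem_undup; apply: map_f.
Qed.

Lemma ev_inSpan (P : B -> Prop) G x : inSpan P x ->
  (forall b, P b -> G b = 0) -> ev G x = 0.
Proof.
move=> sx G0; rewrite ev_regroup big1 // => b _.
case: (ClassicalEpsilon.excluded_middle_informative (P b)) => Pb.
  by rewrite G0 ?mulr0.
by rewrite sx ?mul0r.
Qed.

End Ev.
Arguments dlt {K B} b _.

Lemma ev_lcext (K : fieldType) (B C : eqType) (F : B -> lc K C) (G : C -> K) (x : lc K B) :
  ev G (lcext F x) = ev (fun b => ev G (F b)) x.
Proof.
rewrite /lcext ev_flatten big_map /ev; apply: eq_bigr => p _.
by rewrite -/(ev _ _) ev_scale.
Qed.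


Section All.
Variable K : fieldType.

Definition allQ (B : eqType) (Q : B -> bool) (x : lc K B) :=
  forall p, p \in x -> Q p.2.

Lemma mem_lcext (B C : eqType) (F : B -> lc K C) (x : lc K B) p :
  p \in lcext F x -> exists2 q, q \in x & exists2 r, r \in F q.2 & p.2 = r.2.
Proof.
rewrite /lcext => /flattenP [z /mapP [q qx ->]] /mapP [r rF ->].
by exists q => //; exists r.
Qed.

Lemma allQ_lcext (B C : eqType) (Q : C -> bool) (F : B -> lc K C) x :
  (forall q, q \in x -> allQ Q (F q.2)) -> allQ Q (lcext F x).
Proof.
move=> h p pin; have [q qx [r rF e]] := mem_lcext pin; rewrite e; exact: (h q qx r rF).
Qed.

Lemma allQ_mul (Q : EF -> bool) (x y : lc K EF) :
  (forall p q, p \in x -> q \in y -> Q (mulB p.2 q.2)) -> allQ Q (efmul x y).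
Proof.
move=> h; apply: allQ_lcext => p px; apply: allQ_lcext => q qy r.
by rewrite inE => /eqP -> /=; apply: h.
Qed.

Lemma allQ_opp (B : eqType) (Q : B -> bool) (x : lc K B) :
  allQ Q x -> allQ Q (lcopp x).
Proof. move=> h p /mapP [q qx ->]; apply: (h q qx). Qed.

Lemma allQ_flatten (B : eqType) (Q : B -> bool) (s : seq (lc K B)) :
  (forall z, z \in s -> allQ Q z) -> allQ Q (flatten s).
Proof. by move=> h p /flattenP [z zs pz]; exact: h zs p pz. Qed.


Lemma antip_all k b :
  (acb b -> allQ acb (antipF K k b)) /\ (~~ acb b -> allQ (fun c => ~~ acb c) (antipF K k b)).
Proof.
elim: k b => [|k IH] [n f]; first by split=> _ p.
rewrite /=; case: (n == 0%N).
  by split=> h p; rewrite inE => /eqP ->.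
split=> h; apply/allQ_opp/allQ_flatten => z /mapP [A]; rewrite mem_enum => /andP [adm _] ->.
  have hL : acb (mkEF (stdres f (~: A))).
    by apply/acbP; apply: acyclic_stdres; exact: (elimT (acbP _) h).
  have hR : acb (mkEF (stdres f A)).
    by apply/acbP; apply: acyclic_stdres; exact: (elimT (acbP _) h).
  apply: allQ_mul => p q /((IH _).1 hL) pa; rewrite inE => /eqP -> /=.
  by rewrite acb_mul pa hR.
have : ~ acyclic f by move=> a; move/negP: h; apply; apply/acbP.
move/nonacyclic_split => /(_ A adm) [nl|nr].
  have hL : ~~ acb (mkEF (stdres f (~: A))) by apply/acbP.
  apply: allQ_mul => p q /((IH _).2 hL) pa; rewrite inE => /eqP -> /=.
  by rewrite acb_mul (negbTE pa).
have hR : ~~ acb (mkEF (stdres f A)) by apply/acbP.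
apply: allQ_mul => p q _; rewrite inE => /eqP -> /=.
by rewrite acb_mul (negbTE hR) andbF.
Qed.

Lemma mem_coprod (b : EF) p : p \in coprodB K b ->
  exists n, exists f : {ffun 'I_n -> 'I_n}, exists2 A : {set 'I_n},
    b = mkEF f /\ admissible f A &
    p = (1, (mkEF (stdres f (~: A)), mkEF (stdres f A))).
Proof.
case: b => n f /= /mapP [A]; rewrite mem_enum => adm ->.
by exists n, f, A.
Qed.

End All.

Section Main.
Variable K : fieldType.

Definition phi (b : EF) : lc K EF := if acb b then [:: (1, b)] else [::].

Lemma ev_phi (G : EF -> K) b : ev G (phi b) = if acb b then G b else 0.
Proof. by rewrite /phi; case: (acb b); rewrite ?ev_cons1 ?mul1r ?ev_nil. Qed.

Lemma coef_mul (x y : lc K EF) c :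
  coef (efmul x y) c = ev (fun a => ev (fun b => dlt c (mulB a b)) y) x.
Proof.
rewrite coefE /efmul ev_lcext; apply: eq_ev => a; rewrite ev_lcext.
by apply: eq_ev => b; rewrite ev_cons1 mul1r.
Qed.

Lemma coef_cop (x : lc K EF) c :
  coef (efcop x) c = ev (fun a => ev (dlt c) (coprodB K a)) x.
Proof. by rewrite coefE /efcop ev_lcext. Qed.

Lemma coef_antip (x : lc K EF) c :
  coef (efantipode x) c = ev (fun a => ev (dlt c) (antipB K a)) x.
Proof. by rewrite coefE /efantipode ev_lcext. Qed.

Lemma counitE (x : lc K EF) :
  efcounit x = ev (fun b => (efdeg b == 0%N)%:R) x.
Proof.
rewrite /efcounit /ev; apply: eq_bigr => p _.
by case: (efdeg p.2 == 0%N); rewrite ?mulr1 ?mulr0.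
Qed.

Lemma dlt0 (B : eqType) (b c : B) : c != b -> @dlt K B b c = 0.
Proof. by rewrite /dlt => /negbTE ->. Qed.

Lemma acb_neq (b c : EF) : acb c != acb b -> c != b.
Proof. by apply: contra => /eqP ->. Qed.

Lemma nonacP b : nonacyclicB b -> acb b = false.
Proof. by move=> h; apply/negbTE/acbP. Qed.

Lemma nnonacP b : ~ nonacyclicB b -> acb b.
Proof. by move=> h; case: (acbP b) => // nb; case: h. Qed.

Lemma nacP b : ~ acyclicB b -> acb b = false.
Proof. by move=> h; apply/negbTE/acbP. Qed.

Lemma coprod_split a p : p \in coprodB K a ->
  (acb a -> acb p.2.1 && acb p.2.2) /\ (~~ acb a -> ~~ (acb p.2.1 && acb p.2.2)).
Proof.
move=> /mem_coprod [n [f [A [-> adm] ->]]] /=; split=> h.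
  by apply/andP; split; apply/acbP; apply: acyclic_stdres; exact: (elimT (acbP _) h).
have : ~ acyclic f by move=> af; move/negP: h; apply; apply/acbP.
move/nonacyclic_split => /(_ A adm) [] h'.
  by rewrite (@nacP (mkEF (stdres f (~: A))) h').
by rewrite (@nacP (mkEF (stdres f A)) h') andbF.
Qed.

Lemma antipB_all a :
  (acb a -> allQ acb (antipB K a)) /\ (~~ acb a -> allQ (fun c => ~~ acb c) (antipB K a)).
Proof. exact: antip_all. Qed.

Lemma ev_allQ (B : eqType) (Q : B -> bool) (G H : B -> K) (z : lc K B) :
  allQ Q z -> (forall b, Q b -> G b = H b) -> ev G z = ev H z.
Proof. by move=> az e; apply: eq_ev_in => p /az /e ->. Qed.

Lemma ev_allQ0 (B : eqType) (Q : B -> bool) (G : B -> K) (z : lc K B) :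
  allQ Q z -> (forall b, Q b -> G b = 0) -> ev G z = 0.
Proof. by move=> az e; apply: ev0 => p /az /e ->; rewrite mulr0. Qed.

Lemma ideal_part : hopf_ideal K nonacyclicB.
Proof.
split.
- move=> x y sx; split=> b /nnonacP hb.
    rewrite coef_mul; apply: (ev_inSpan sx) => a /nonacP ha.
    by apply: ev0 => q _; rewrite dlt0 ?mulr0 // acb_neq // acb_mul ha hb.
  rewrite coef_mul; apply: ev0 => p _.
  rewrite (@ev_inSpan _ _ nonacyclicB _ x sx) ?mulr0 // => a /nonacP ha.
  by rewrite dlt0 // acb_neq // acb_mul ha andbF hb.
- move=> x sx b1 b2 /nnonacP h1 /nnonacP h2.
  rewrite coef_cop; apply: (ev_inSpan sx) => a /nonacP ha.
  apply: ev0 => p /coprod_split [_ /(_ (negbT ha))] np.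
  rewrite dlt0 ?mulr0 //; apply: contra np => /eqP ->; by rewrite h1 h2.
- move=> x sx; rewrite counitE; apply: (ev_inSpan sx) => a /nonacP ha.
  case: eqP => // /acb_deg0; by rewrite ha.
- move=> x sx c /nnonacP hc; rewrite coef_antip; apply: (ev_inSpan sx) => a /nonacP ha.
  have := (antipB_all a).2 (negbT ha) => al.
  apply: (ev_allQ0 al) => b nb; apply: dlt0; apply: acb_neq.
  by rewrite (negbTE nb) hc.
Qed.

Lemma sub_part : hopf_subalgebra K acyclicB.
Proof.
split.
- move=> b /nacP hb; rewrite coefE ev_cons1 dlt0 ?mulr0 //.
  by apply: acb_neq; rewrite hb acb_empty.
- move=> x y sx sy c /nacP hc; rewrite coef_mul; apply: (ev_inSpan sx) => a /acbP ha.
  apply: (ev_inSpan sy) => b /acbP hb; apply: dlt0; apply: acb_neq.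
  by rewrite acb_mul ha hb hc.
- move=> x sx b1 b2 nb; rewrite coef_cop; apply: (ev_inSpan sx) => a /acbP ha.
  apply: ev0 => p /coprod_split [/(_ ha) hp _]; rewrite dlt0 ?mulr0 //.
  apply/eqP => e; apply: nb; move: hp; rewrite e => /andP[/acbP ? /acbP ?]; by split.
- move=> x sx c /nacP hc; rewrite coef_antip; apply: (ev_inSpan sx) => a /acbP ha.
  have := (antipB_all a).1 ha => al.
  apply: (ev_allQ0 al) => b nb; apply: dlt0; apply: acb_neq.
  by rewrite nb hc.
Qed.


Lemma ev_mul (G : EF -> K) (x y : lc K EF) :
  ev G (efmul x y) = ev (fun a => ev (fun b => G (mulB a b)) y) x.
Proof.
rewrite /efmul ev_lcext; apply: eq_ev => a; rewrite ev_lcext.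
by apply: eq_ev => b; rewrite ev_cons1 mul1r.
Qed.

Lemma ev_T (G : EF * EF -> K) (p : EF * EF) :
  ev G [seq (a.1 * c.1, (a.2, c.2)) | a <- phi p.1, c <- phi p.2] =
  if acb p.1 && acb p.2 then G p else 0.
Proof.
case: p => p1 p2 /=; rewrite /phi.
case: (acb p1); case: (acb p2) => /=; rewrite ?ev_nil //.
by rewrite /ev big_seq1 !mul1r.
Qed.

Lemma morph_part : hopf_morphism phi.
Proof.
split.
- move=> c; rewrite !coefE ev_lcext ev_cons1 mul1r ev_phi acb_empty.
  by rewrite ev_cons1 mul1r.
- move=> x y c; rewrite coefE ev_lcext ev_mul coef_mul ev_lcext.
  apply: eq_ev => a; rewrite ev_phi ev_lcext; case ha: (acb a).
    by apply: eq_ev => b; rewrite !ev_phi acb_mul ha.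
  by apply: ev0 => p _; rewrite ev_phi acb_mul ha /= mulr0.
- move=> x c; rewrite coef_cop ev_lcext coefE /tensor_map ev_lcext /efcop ev_lcext.
  apply: eq_ev => a; rewrite ev_phi; case ha: (acb a).
    apply: eq_ev_in => p pin; rewrite ev_T.
    by rewrite ((coprod_split pin).1 ha).
  symmetry; apply: ev0 => p pin; rewrite ev_T.
  by rewrite (negbTE ((coprod_split pin).2 (negbT ha))) mulr0.
- move=> x; rewrite !counitE ev_lcext; apply: eq_ev => a; rewrite ev_phi.
  case ha: (acb a) => //; case: eqP => // /acb_deg0; by rewrite ha.
- move=> x c; rewrite coefE ev_lcext /efantipode ev_lcext coef_antip ev_lcext.
  apply: eq_ev => a; rewrite ev_phi; case ha: (acb a).
    apply: (ev_allQ ((antipB_all a).1 ha)) => b hb.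
    by rewrite ev_phi hb.
  apply: (ev_allQ0 ((antipB_all a).2 (negbT ha))) => b hb.
  by rewrite ev_phi (negbTE hb).
Qed.

Lemma coef_nil (B : eqType) (b : B) : coef ([::] : lc K B) b = 0.
Proof. by rewrite /coef big_nil. Qed.

End Main.

Theorem mainTheorem14 (K : fieldType) :
  hopf_ideal K nonacyclicB /\
  hopf_subalgebra K acyclicB /\
  exists phi : EF -> lc K EF,
    [/\ hopf_morphism phi,
        (forall x : lc K EF, inSpan acyclicB (lcext phi x)),
        (forall y : lc K EF, inSpan acyclicB y ->
           exists x : lc K EF, lceq (lcext phi x) y)
      & (forall x : lc K EF, lceq (lcext phi x) [::] <-> inSpan nonacyclicB x)].
Proof.
split; first exact: ideal_part.
split; first exact: sub_part.
exists (@phi K); split.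
- exact: morph_part.
- move=> x c /nacP hc; rewrite coefE ev_lcext; apply: ev0 => p _.
  rewrite ev_phi; case ha: (acb p.2); last by rewrite mulr0.
  by rewrite dlt0 ?mulr0 // acb_neq // ha hc.
- move=> y sy; exists y => c; apply/eqP; rewrite -subr_eq0 !coefE ev_lcext ev_sub.
  apply/eqP; apply: (ev_inSpan sy) => a /acbP ha; by rewrite ev_phi ha subrr.
- move=> x; split.
    move=> h b /nnonacP hb; rewrite -(coef_nil K b) -h !coefE ev_lcext.
    apply: eq_ev => a; rewrite ev_phi; case ha: (acb a) => //.
    by rewrite dlt0 // acb_neq // ha hb.
  move=> sx b; rewrite coef_nil coefE ev_lcext; apply: (ev_inSpan sx) => a /nonacP ha.
  by rewrite ev_phi ha.
Qed.
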